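(* Let $\mathcal K$ and $\mathcal K_\sigma$ be weighted simplicial complexes on a finite vertex set such that $\mathcal K_\sigma=\mathcal K\cup\{\sigma\}$, where $\sigma\notin\mathcal K$ is a $k$-simplex, the weight function $w$ of $\mathcal K_\sigma$ restricts to that of $\mathcal K$, and $w$ is injective on $k$-faces. Denote labels in $\mathcal K$ by $\ell$ and in $\mathcal K_\sigma$ by $\ell_\sigma$, and let $\mathrm{MSA}(\cdot)$ denote the (unique) minimal $k$-spanning acycle. Then: (i) $|\mathrm{MSA}(\mathcal K_\sigma)\setminus\mathrm{MSA}(\mathcal K)|\le 1$ and $|\mathrm{MSA}(\mathcal K)\setminus\mathrm{MSA}(\mathcal K_\sigma)|\le 1$; equivalently $\sum_{\tau\in\mathcal K}\mathbf 1(\ell(\tau)\ne\ell_\sigma(\tau))\le 1$. (ii) If $\ell_\sigma(\sigma)=1$, then $\mathrm{MSA}(\mathcal K)=\mathrm{MSA}(\mathcal K_\sigma)$, and hence $\mathbf M^\phi(\mathcal K)=\mathbf M^\phi(\mathcal K_\sigma)$ for every strictly increasing $\phi:\mathbb{R}_+\to\mathbb{R}_+$.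
   Context: A weighted complex is a simplicial complex $\mathcal K$ with a monotone weight $w:\mathcal K\to\mathbb{R}$ (every sublevel set $\{\tau:w(\tau)\le t\}$ is a subcomplex). For a simplex $\tau$, $\mathcal K(\tau^-)=\{\rho\in\mathcal K:w(\rho)<w(\tau)\}$. Homology is over a field. A $j$-simplex $\tau$ has label $\ell(\tau)=1$ (positive) if $\partial\tau\in\partial C_j(\mathcal K(\tau^-))$ (adding $\tau$ to $\mathcal K(\tau^-)$ creates a new $j$-cycle) and $\ell(\tau)=-1$ (negative) otherwise. A set $S$ of $k$-faces is a $k$-spanning acycle if $\beta_{k-1}(\mathcal K_{k-1}\cup S)=\beta_{k-1}(\mathcal K)$ and $\beta_k(\mathcal K_{k-1}\cup S)=0$ (reduced Betti numbers, $\mathcal K_{k-1}$ the $(k-1)$-skeleton); the minimal $k$-spanning acycle $\mathrm{MSA}(\mathcal K)$ minimizes $\sum_{\tau\in S}w(\tau)$. $\mathbf M^\phi(\mathcal K)=\sum_{\tau\in\mathrm{MSA}(\mathcal K)}\phi(w(\tau))$. *)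

(* Defs.v *)
From HB Require Import structures.
From mathcomp Require Import all_boot all_order all_algebra.
From mathcomp Require Import reals.
Set Implicit Arguments. Unset Strict Implicit. Unset Printing Implicit Defensive.
Import Order.TTheory GRing.Theory Num.Theory.
Local Open Scope ring_scope.

(* Simplices on a finite vertex type V are finite sets of vertices;
   a j-simplex has cardinality j+1.  The empty set plays the role of the
   unique (-1)-simplex of the augmented chain complex (reduced homology). *)

Section Chains.
Variables (F : fieldType) (V : finType).

Definition is_complex (K : {set {set V}}) : Prop :=
  set0 \notin K /\
  forall s t : {set V}, s \in K -> t \subset s -> t != set0 -> t \in K.

Definition chain := {ffun {set V} -> F^o}.

Definition chi (s : {set V}) : chain := [ffun t => if t == s then 1 else 0].

(* incidence number [s : t] w.r.t. the vertex order given by enum_rank: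
   (-1)^i if t is s with its i-th vertex removed, 0 otherwise *)
Definition incid (s t : {set V}) : F :=
  if (t \subset s) && (#|s| == #|t|.+1)%N then
    \sum_(v in s :\: t)
       (-1) ^+ #|[set u in s | (enum_rank u < enum_rank v)%N]|
  else 0.

Definition bd (c : chain) : chain := [ffun t => \sum_(s : {set V}) c s * incid s t].

Lemma bd_linear : linear bd.
Proof.
move=> a x y; apply/ffunP=> t; rewrite !ffunE.
rewrite scaler_sumr -big_split; apply: eq_bigr => s _.
by rewrite !ffunE mulrDl scalerAl.
Qed.

HB.instance Definition _ := GRing.isLinear.Build F chain chain _ bd bd_linear.

Definition bdL : 'End(chain) := linfun bd.

(* simplices of cardinality p (i.e. of dimension p-1) of the complex S,
   augmented with the empty simplex in cardinality 0 *)
Definition simplices (S : {set {set V}}) (p : nat) : {set {set V}} :=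
  [set s | ((s \in S) || (s == set0)) && (#|s| == p)].

Definition Cspace (S : {set {set V}}) (p : nat) : {vspace chain} :=
  (<< [seq chi s | s <- enum (simplices S p)] >>)%VS.

(* reduced Betti number of S in dimension p-1 (indexed by cardinality p) *)
Definition rbetti (S : {set {set V}}) (p : nat) : nat :=
  (\dim (lker bdL :&: Cspace S p) - \dim (bdL @: Cspace S p.+1))%N.

End Chains.

Section Weighted.
Variables (F : fieldType) (V : finType) (R : realType).

(* monotone weight on K: sublevel sets are subcomplexes *)
Definition monotone_weight (K : {set {set V}}) (w : {set V} -> R) : Prop :=
  forall s t, s \in K -> t \in K -> t \subset s -> w t <= w s.

Definition Kminus (K : {set {set V}}) (w : {set V} -> R) (tau : {set V}) :=
  [set rho in K | w rho < w tau].

Definition positive (K : {set {set V}}) (w : {set V} -> R) (tau : {set V}) : bool :=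
  (bdL F V (chi F tau) \in (bdL F V @: Cspace F (Kminus K w tau) #|tau|))%VS.

Definition label (K : {set {set V}}) (w : {set V} -> R) (tau : {set V}) : int :=
  if positive K w tau then 1 else -1.

Definition kfaces (K : {set {set V}}) (k : nat) := [set s in K | #|s| == k.+1].
Definition skeleton_below (K : {set {set V}}) (k : nat) := [set s in K | (#|s| <= k)%N].

Definition spanning_acycle (K : {set {set V}}) (k : nat) (S : {set {set V}}) : bool :=
  [&& S \subset kfaces K k,
      rbetti F (skeleton_below K k :|: S) k == rbetti F K k &
      rbetti F (skeleton_below K k :|: S) k.+1 == 0%N].

Definition weight_sum (w : {set V} -> R) (S : {set {set V}}) : R := \sum_(t in S) w t.

Definition is_MSA (K : {set {set V}}) (w : {set V} -> R) (k : nat) (S : {set {set V}}) : Prop :=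
  spanning_acycle K k S /\
  forall S', spanning_acycle K k S' -> weight_sum w S <= weight_sum w S'.

Definition Mphi (phi : R -> R) (w : {set V} -> R) (S : {set {set V}}) : R :=
  \sum_(t in S) phi (w t).

End Weighted.

(* Main.v *)
Require Import Defs.
From HB Require Import structures.
From mathcomp Require Import all_boot all_order all_algebra.
From mathcomp Require Import reals.
From mathcomp Require Import ring zify.
Import Order.TTheory GRing.Theory Num.Theory.
Local Open Scope ring_scope.
Set Implicit Arguments. Unset Strict Implicit. Unset Printing Implicit Defensive.
Section Abstract.
Variables (F : fieldType) (vT : vectType F) (T : finType) (e : T -> vT).

Implicit Types (S X A : {set T}).
Definition sp (S : {set T}) : {vspace vT} := (\sum_(x in S) <[e x]>)%VS.

Lemma sp_mem S x : x \in S -> e x \in sp S.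
Proof.
move=> xS; apply/subvP: (memv_line (e x)); exact: (sumv_sup x).
Qed.

Lemma sp_subP S (U : {vspace vT}) : (forall x, x \in S -> e x \in U) -> (sp S <= U)%VS.
Proof.
move=> H; apply/subv_sumP => x xS; rewrite -memvE; exact: H.
Qed.

Lemma sp_sub S S' : S \subset S' -> (sp S <= sp S')%VS.
Proof. move=> /subsetP H; apply: sp_subP => x xS; exact/sp_mem/H. Qed.

Lemma sp_setU1 x S : sp (x |: S) = (<[e x]> + sp S)%VS.
Proof.
apply/subv_anti/andP; split.
  apply: sp_subP => y; rewrite !inE => /orP[/eqP->|yS].
    by apply/subvP: (memv_line (e x)); apply: addvSl.
  by apply/subvP: (sp_mem yS); rewrite addvC; apply: addvSl.
rewrite subv_add -memvE sp_mem ?setU11 //=.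
by apply: sp_sub; apply: subsetUr.
Qed.

Lemma dim_line_add (v : vT) (U : {vspace vT}) :
  \dim (<[v]> + U) = ((v \notin U) + \dim U)%N.
Proof.
case: (boolP (v \in U)) => vU /=.
  by rewrite (addv_idPr _) // -memvE.
rewrite dimv_disjoint_sum ?dim_vline; last first.
  apply/eqP; rewrite -subv0; apply/subvP => u; rewrite memv_cap => /andP[/vlineP[c ->] cU].
  rewrite memv0; case: (eqVneq c 0) => [->|cn0]; first by rewrite scale0r.
  by have := memvZ c^-1 cU; rewrite scalerA mulVf // scale1r (negbTE vU).
by case: (eqVneq v 0) => [v0|//]; move: vU; rewrite v0 mem0v.
Qed.

Lemma dim_sp_setU1 x S : \dim (sp (x |: S)) = ((e x \notin sp S) + \dim (sp S))%N.
Proof. by rewrite sp_setU1 dim_line_add. Qed.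

Lemma sp_span S : sp S = <<[seq e x | x <- enum S]>>%VS.
Proof. by rewrite span_def big_map big_enum. Qed.

Lemma dim_sp_le S : (\dim (sp S) <= #|S|)%N.
Proof. by rewrite sp_span (leq_trans (dim_span _)) // size_map cardE. Qed.

Definition indep S := \dim (sp S) == #|S|.

Lemma indep0 : indep set0.
Proof. by rewrite /indep cards0 -leqn0 (leq_trans (dim_sp_le _)) ?cards0. Qed.

Lemma indepD1 S x : indep S -> x \in S -> (e x \notin sp (S :\ x)) /\ indep (S :\ x).
Proof.
move=> /eqP H xS; have le := dim_sp_le (S :\ x).
have E : \dim (sp S) = ((e x \notin sp (S :\ x)) + \dim (sp (S :\ x)))%N.
  by rewrite -{1}(setD1K xS) dim_sp_setU1.
move: H; rewrite E (cardsD1 x S) xS.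
case: (e x \notin _) => /=.
  by move=> /eqP; rewrite eqn_add2l => h; split.
by rewrite add0n => h; move: le; rewrite h add1n ltnn.
Qed.

Variables (R : realType) (w : T -> R).

Definition P (A : {set T}) a := [set b in A | w b < w a].
Definition G (A : {set T}) := [set a in A | e a \notin sp (P A a)].
Definition basis (A S : {set T}) := [&& S \subset A, indep S & sp S == sp A].
Definition ws (S : {set T}) := \sum_(t in S) w t.

Lemma exists_max (X : {set T}) x0 : x0 \in X ->
  exists2 x, x \in X & forall y, y \in X -> w y <= w x.
Proof.
move=> x0X.
case: (@Order.TotalTheory.arg_maxP _ R T x0 (mem X) w x0X) => x xX H.
by exists x.
Qed.

Lemma G_indep A : {in A &, injective w} -> forall X, X \subset G A -> indep X.
Proof.
move=> Hinj X; move: {2}#|X| (leqnn #|X|) => n; elim: n X => [|n IH] X.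
  by rewrite leqn0 cards_eq0 => /eqP -> _; exact: indep0.
move=> Xn XG.
case: (set_0Vmem X) => [->|[x0 x0X]]; first exact: indep0.
have [x xX xmax] := exists_max x0X.
have xG := subsetP XG x xX; move: (xG); rewrite inE => /andP[xA xn].
have sub : X :\ x \subset P A x.
  apply/subsetP => y; rewrite !inE => /andP[yx yX].
  have yA : y \in A by move: (subsetP XG y yX); rewrite inE => /andP[].
  rewrite yA /= lt_neqAle xmax // andbT.
  by apply: contra yx => /eqP /Hinj ->.
have Hi : indep (X :\ x).
  apply: IH; last by apply: subset_trans XG; apply: subD1set.
  by move: Xn; rewrite (cardsD1 x X) xX.
have xn' : e x \notin sp (X :\ x).
  by apply: contra xn; apply/subvP/sp_sub.
rewrite /indep -(setD1K xX) dim_sp_setU1 xn' (eqP Hi).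
by rewrite [X in _ == X](cardsU1 x) !inE eqxx.
Qed.


Lemma MSA_eq A S : {in A &, injective w} -> basis A S ->
  (forall S', basis A S' -> ws S <= ws S') -> S = G A.
Proof.
move=> Hinj /and3P[SA iS /eqP spS] Hmin.
case: (boolP [exists m in S, m \notin G A]) => [/existsP[m /andP[mS mG]]|].
  have mA := subsetP SA m mS.
  have emP : e m \in sp (P A m) by move: mG; rewrite inE mA /= negbK.
  have [emU iSm] := indepD1 iS mS.
  have [b bP ebU] : exists2 b, b \in P A m & e b \notin sp (S :\ m).
    apply/exists_inP; apply: contraNT emU => /exists_inPn H.
    by apply/subvP: emP; apply: sp_subP => b /H; rewrite negbK.
  move: (bP); rewrite inE => /andP[bA wb].
  have bSm : b \notin S :\ m by apply: contra ebU; apply: sp_mem.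
  pose S' := b |: (S :\ m).
  have cS' : #|S'| = #|S| by rewrite cardsU1 bSm (cardsD1 m S) mS.
  have iS' : indep S' by rewrite /indep /S' dim_sp_setU1 ebU (eqP iSm) cardsU1 bSm.
  have sub' : (sp S' <= sp S)%VS.
    rewrite /S' sp_setU1 subv_add -memvE spS sp_mem //=.
    by rewrite -spS; apply: sp_sub; apply: subD1set.
  have eq' : sp S' = sp S.
    apply/eqP; rewrite eqEdim sub' /= (eqP iS') (eqP iS) cS' //.
  have : basis A S'.
    apply/and3P; split => //; last by rewrite eq' spS.
    apply/subsetP => y; rewrite !inE => /orP[/eqP->//|/andP[_ yS]].
    exact: (subsetP SA).
  move=> /Hmin; rewrite /ws /S' big_setU1 //= (big_setD1 m mS) /=.
  by rewrite lerD2r leNgt wb.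
rewrite negb_exists => /forallP H.
have SG : S \subset G A by apply/subsetP => m mS; move: (H m); rewrite mS /= negbK.
have iG := G_indep Hinj (subxx (G A)).
apply/eqP; rewrite eqEcard SG /=.
rewrite -(eqP iS) -(eqP iG) spS dimvS //.
apply: sp_sub; apply/subsetP => a; rewrite inE => /andP[].
done.
Qed.

Lemma P_setU1_sub A s a : (sp (P (s |: A) a) <= <[e s]> + sp (P A a))%VS.
Proof.
rewrite -sp_setU1; apply: sp_sub; apply/subsetP => b.
by rewrite !inE => /andP[/orP[->|->] ->]; rewrite ?orbT.
Qed.

Lemma P_sub_setU1 A s a : (sp (P A a) <= sp (P (s |: A) a))%VS.
Proof.
apply: sp_sub; apply/subsetP => b.
by rewrite !inE => /andP[-> ->]; rewrite orbT.
Qed.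

Lemma le1_change A s : {in s |: A &, injective w} ->
  (#|[set a in A | (e a \in sp (P A a)) != (e a \in sp (P (s |: A) a))]| <= 1)%N.
Proof.
move=> Hinj.
have key : forall a, a \in [set a in A | (e a \in sp (P A a)) != (e a \in sp (P (s |: A) a))] ->
    [/\ a \in A, e a \notin sp (P A a) & e a \in sp (P (s |: A) a)].
  move=> a; rewrite inE => /andP[aA].
  case: (boolP (e a \in sp (P A a))) => H1 /=.
    by rewrite (subvP (P_sub_setU1 A s a) _ H1).
  by rewrite negbK => H2; split.
apply/card_le1_eqP => a1 a2 /key[a1A n1 i1] /key[a2A n2 i2].
have sA : forall a, a \in A -> a \in s |: A by move=> a aA; rewrite !inE aA orbT.
have main : forall x y, x \in A -> y \in A -> w x < w y ->
    e x \notin sp (P A x) -> e x \in sp (P (s |: A) x) ->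
    e y \notin sp (P A y) -> e y \in sp (P (s |: A) y) -> False.
  move=> x y xA yA wxy nx ix ny iy.
  have ix' := subvP (P_setU1_sub A s x) _ ix.
  have nsx : e s \notin sp (P A x).
    apply: contra nx => H; apply/subvP: ix'; rewrite subv_add -memvE H subvv //.
  have eqd : (<[e x]> + sp (P A x) = <[e s]> + sp (P A x))%VS.
    apply/eqP; rewrite eqEdim !dim_line_add nx nsx leqnn andbT.
    by rewrite subv_add -memvE ix' addvC addvSl.
  have es : e s \in sp (P A y).
    have : e s \in (<[e s]> + sp (P A x))%VS.
      by apply/subvP: (memv_line (e s)); apply: addvSl.
    rewrite -eqd -sp_setU1; apply/subvP; apply: sp_sub; apply/subsetP => b.
    rewrite !inE => /orP[/eqP->|/andP[bA wb]]; first by rewrite xA wxy.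
    by rewrite bA (lt_trans wb wxy).
  apply: (negP ny); apply/subvP: (subvP (P_setU1_sub A s y) _ iy).
  by rewrite subv_add -memvE es subvv.
case: (eqVneq a1 a2) => // ne.
have wne : w a1 != w a2 by apply: contra ne => /eqP /Hinj; rewrite !sA // => /(_ isT isT) ->.
case: (ltgtP (w a1) (w a2)) wne => // lt _.
  by case: (main _ _ a1A a2A lt n1 i1 n2 i2).
by case: (main _ _ a2A a1A lt n2 i2 n1 i1).
Qed.

Lemma G_same A s : s \notin A -> e s \in sp (P (s |: A) s) -> G (s |: A) = G A.
Proof.
move=> sA es.
have es' : e s \in sp (P A s).
  apply/subvP: es; apply: sp_sub; apply/subsetP => b; rewrite !inE.
  by case/andP => /orP[/eqP->|->//]; rewrite ltxx andbF.
apply/setP => a; rewrite !inE.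
case: (eqVneq a s) => [->|ne] /=; first by rewrite es (negbTE sA).
case: (boolP (a \in A)) => //= aA.
suff -> : sp (P (s |: A) a) = sp (P A a) by [].
apply/subv_anti; rewrite P_sub_setU1 andbT.
apply: sp_subP => b; rewrite !inE => /andP[/orP[/eqP->|bA] wb]; last by apply: sp_mem; rewrite inE bA.
apply/subvP: es'; apply: sp_sub; apply/subsetP => c; rewrite !inE => /andP[-> /lt_trans]; exact.
Qed.

Lemma G_sub A s : G (s |: A) :\: G A \subset [set s].
Proof.
apply/subsetP => a; rewrite !inE => /and3P[nG /orP[//|aA] na].
move: nG; rewrite aA /= negbK => H; move: na; apply: contraLR => _.
by rewrite negbK; apply/subvP: H; apply: P_sub_setU1.
Qed.

Lemma G_sub2 A s : G A :\: G (s |: A) \subset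
  [set a in A | (e a \in sp (P A a)) != (e a \in sp (P (s |: A) a))].
Proof.
apply/subsetP => a; rewrite !inE => /and3P[nG aA na].
move: nG; rewrite aA orbT /= negbK => H.
by rewrite /= (negbTE na) H.
Qed.

End Abstract.
Section Bd2.
Variables (F : fieldType) (V : finType).

Implicit Types (s t u : {set V}) (v : V).
Definition rk (v : V) : nat := enum_rank v.
Definition sg (s : {set V}) (v : V) : F := (-1) ^+ #|[set u in s | (rk u < rk v)%N]|.

Lemma incidE s t : incid F s t =
  if (t \subset s) && (#|s| == #|t|.+1) then \sum_(v in s :\: t) sg s v else 0.
Proof. by []. Qed.

Lemma rk_inj : injective rk.
Proof. by move=> x y /val_inj /enum_rank_inj. Qed.

Lemma L1 s (X : {set V} -> F) :
  \sum_u incid F s u * X u = \sum_(v in s) sg s v * X (s :\ v).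
Proof.
have -> : \sum_(v in s) sg s v * X (s :\ v) =
    \sum_(v in s) \sum_u (if u == s :\ v then sg s v * X u else 0).
  apply: eq_bigr => v _; rewrite (bigD1 (s :\ v)) //= eqxx big1 ?addr0 //.
  by move=> u /negbTE ->.
rewrite exchange_big; apply: eq_bigr => u _.
rewrite incidE; case: ifP => [/andP[us /eqP cs]|nc].
  have c1 : #|s :\: u| == 1%N.
    by rewrite cardsD (setIidPr us) cs subSn // subnn.
  have [v0 def] := cards1P c1.
  have v0s : v0 \in s.
    have : v0 \in s :\: u by rewrite def set11.
    by rewrite inE => /andP[].
  have ue : u = s :\ v0.
    by rewrite -def setDDr setDv set0U (setIidPr us).
  rewrite def big_set1 (bigD1 v0) //= -ue eqxx big1 ?addr0 //.
  move=> v /andP[vs vn]; rewrite ue; case: eqP => // /setP /(_ v0).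
  by rewrite !inE eqxx v0s /= eq_sym (negbTE vn).
rewrite mul0r big1 // => v vs; case: eqP => // ue; move: nc.
by rewrite ue subD1set (cardsD1 v s) vs eqxx.
Qed.

Lemma L2 s t : incid F s t = \sum_(v in s) sg s v * (s :\ v == t)%:R.
Proof.
rewrite -(L1 s (fun u => (u == t)%:R)) (bigD1 t) //= eqxx mulr1 big1 ?addr0 //.
by move=> u /negbTE; rewrite eq_sym => ->; rewrite mulr0.
Qed.

Lemma sgD1 s v v' : v \in s -> v' != v ->
  sg (s :\ v) v' = (if (rk v < rk v')%N then -1 else 1) * sg s v'.
Proof.
move=> vs ne.
have E : [set u in s :\ v | (rk u < rk v')%N] = [set u in s | (rk u < rk v')%N] :\ v.
  by apply/setP => u; rewrite !inE andbA.
rewrite /sg E [in RHS](cardsD1 v) exprD !inE vs /=.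
by case: (rk v < rk v')%N; rewrite ?expr1 ?expr0 ?mul1r // mulrA mulrNN !mul1r.
Qed.

Lemma bd2 s t : \sum_u incid F s u * incid F u t = 0.
Proof.
rewrite L1.
pose f v v' := sg s v * sg s v' * (s :\ v :\ v' == t)%:R.
have fsym : forall v v', f v v' = f v' v.
  by move=> v v'; rewrite /f [sg s v * _]mulrC setDDl setDDl setUC.
have step1 : forall v, v \in s -> sg s v * incid F (s :\ v) t =
    - \sum_(v' in s | (rk v < rk v')%N) f v v' + \sum_(v' in s | (rk v' < rk v)%N) f v v'.
  move=> v vs; rewrite L2 mulr_sumr.
  rewrite (bigID (fun v' => (rk v < rk v')%N)) /=; congr (_ + _).
    rewrite -sumrN; apply: eq_big => [v'|v' /andP[]].
      rewrite !inE; case: (eqVneq v' v) => [->|] /=; first by rewrite ltnn andbF.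
      by [].
    rewrite !inE => /andP[ne _] lt; rewrite sgD1 // lt /f; ring.
  apply: eq_big => [v'|v' /andP[]].
    rewrite !inE; case: (eqVneq v' v) => [->|ne] /=; first by rewrite ltnn andbF.
    rewrite -leqNgt leq_eqVlt; case: (v' \in s) => //=.
    by case: eqP => [/rk_inj /eqP|//]; rewrite (negbTE ne).
  rewrite !inE => /andP[ne _] lt; rewrite sgD1 // ifN // /f; ring.
rewrite (eq_bigr _ step1) big_split /= sumrN.
set A := \sum_(i in s) _.
suff -> : \sum_(i in s) \sum_(v' in s | (rk v' < rk i)%N) f i v' = A by rewrite addNr.
rewrite (exchange_big_dep (mem s)) /=; last by move=> i j _ /andP[].
rewrite /A; apply: eq_bigr => v vs; apply: eq_big => [v'|v' _]; [by rewrite vs | exact: fsym].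
Qed.

End Bd2.
Section Concrete.
Variables (F : fieldType) (V : finType).
Implicit Types (s t u : {set V}) (S K X : {set {set V}}).

Definition ee s : chain F V := bdL F V (chi F s).

Lemma bd_chi s t : bd (chi F s) t = incid F s t.
Proof.
rewrite ffunE (bigD1 s) //= ffunE eqxx mul1r big1 ?addr0 // => s' ne.
by rewrite ffunE (negbTE ne) mul0r.
Qed.

Lemma ee_ker s : ee s \in lker (bdL F V).
Proof.
rewrite memv_ker /ee !lfunE /=; apply/eqP/ffunP => t; rewrite !ffunE.
rewrite -[RHS](@bd2 F V s t); apply: eq_bigr => u _; by rewrite bd_chi.
Qed.

Definition evx (x : {set V}) (c : chain F V) : F^o := c x.
Lemma evx_lin x : linear (evx x).
Proof. by move=> a u v; rewrite /evx !ffunE. Qed.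
HB.instance Definition _ x := GRing.isLinear.Build F (chain F V) F^o _ (evx x) (evx_lin x).

Lemma chi_notin x S : x \notin S -> chi F x \notin sp (@chi F V) S.
Proof.
move=> xS.
have : (sp (@chi F V) S <= lker (linfun (evx x)))%VS.
  apply: sp_subP => y yS; rewrite memv_ker lfunE /= /evx ffunE.
  case: (eqVneq x y) => [Exy|_ //]; by move: yS; rewrite -Exy (negbTE xS).
move=> /subvP H; apply/negP => /H; rewrite memv_ker lfunE /= /evx ffunE eqxx.
by rewrite oner_eq0.
Qed.

Lemma chi_indep S : indep (@chi F V) S.
Proof.
move: {2}#|S| (leqnn #|S|) => n; elim: n S => [|n IH] S.
  by rewrite leqn0 cards_eq0 => /eqP ->; exact: indep0.
move=> Sn; case: (set_0Vmem S) => [->|[x xS]]; first exact: indep0.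
have Hi : indep (@chi F V) (S :\ x).
  by apply: IH; move: Sn; rewrite (cardsD1 x S) xS.
rewrite /indep -(setD1K xS) dim_sp_setU1 chi_notin ?setD11 // (eqP Hi).
by rewrite [X in _ == X](cardsU1 x) !inE eqxx.
Qed.

Lemma spE X : (<<map (bdL F V) (map (@chi F V) (enum X))>>)%VS = sp ee X.
Proof. by rewrite sp_span -map_comp. Qed.

Lemma supp_span (c : chain F V) X : (forall t, c t != 0 -> t \in X) ->
  c \in <<map (@chi F V) (enum X)>>%VS.
Proof.
move=> H.
have -> : c = \sum_(t in X) c t *: chi F t.
  apply/ffunP => t; rewrite sum_ffunE; case: (boolP (t \in X)) => tX.
    rewrite (bigD1 t) //= !ffunE eqxx big1 ?addr0; first by rewrite -[RHS]/(c t * 1) mulr1.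
    by move=> t' /andP[_ ne]; rewrite !ffunE eq_sym (negbTE ne) scaler0.
  rewrite big1; first by apply/eqP; apply: contraNT tX => /H.
  by move=> t' t'X; rewrite !ffunE; case: eqP => [e'|_]; [move: tX; rewrite e' t'X | rewrite scaler0].
apply: memv_suml => t tX; apply: memvZ; apply: memv_span.
by apply: map_f; rewrite mem_enum.
Qed.

Lemma ee_Cspace K k s : is_complex K -> s \in kfaces K k -> ee s \in Cspace F K k.
Proof.
move=> [_ HK]; rewrite inE => /andP[sK /eqP cs].
apply: supp_span => t; rewrite /ee lfunE /= bd_chi incidE.
case: ifP => [/andP[ts /eqP ct] _|]; last by rewrite eqxx.
rewrite inE; move: ct; rewrite cs => /eqP; rewrite eqSS => /eqP ->; rewrite eqxx andbT.
by case: (eqVneq t set0) => [->|tn]; rewrite ?orbT // (HK s t).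
Qed.

End Concrete.
Section Link.
Variables (F : fieldType) (V : finType) (R : realType).
Implicit Types (s t u tau sigma : {set V}) (S K X : {set {set V}}) (w : {set V} -> R).

Lemma acyc_basis K k S : is_complex K ->
  spanning_acycle F K k S = basis (ee F (V:=V)) (kfaces K k) S.
Proof.
move=> HK; rewrite /spanning_acycle /basis.
case: (boolP (S \subset kfaces K k)) => //= SA.
have inS : forall s, s \in S -> #|s| = k.+1.
  by move=> s /(subsetP SA); rewrite inE => /andP[_ /eqP].
set Kc := skeleton_below K k :|: S.
have s1 : simplices Kc k = simplices K k.
  apply/setP => s; rewrite !inE.
  case: (eqVneq #|s| k) => [h|h]; rewrite ?andbF ?andbT //.
  rewrite h leqnn andbT; case: (boolP (s \in S)) => sS; last by rewrite orbF.
  by exfalso; move: h; rewrite (inS s sS); lia.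
have s2 : simplices Kc k.+1 = S.
  apply/setP => s; rewrite !inE.
  case: (boolP (s \in S)) => sS; first by rewrite orbT /= (inS s sS) eqxx.
  rewrite orbF; case: (eqVneq #|s| k.+1) => [h|h]; rewrite ?andbF ?andbT //.
  by rewrite h ltnn andbF /=; apply/negbTE; apply/eqP => s0; move: h; rewrite s0 cards0.
have s3 : simplices Kc k.+2 = set0.
  apply/setP => s; rewrite !inE.
  case: (boolP (s \in S)) => sS; first by rewrite (inS s sS) orbT /=; apply/eqP; lia.
  rewrite orbF; case: (eqVneq #|s| k.+2) => [h|h]; rewrite ?andbF //.
  rewrite h andbT; case: (eqVneq s set0) => [s0|]; first by move: h; rewrite s0 cards0.
  by rewrite orbF => _; rewrite ltnNge leqnSn andbF.
have s4 : simplices K k.+1 = kfaces K k.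
  apply/setP => s; rewrite !inE.
  case: (eqVneq s set0) => [->|_]; last by rewrite orbF.
  by rewrite cards0 !andbF.
rewrite /rbetti /Cspace s1 s2 s3 s4 enum_set0 /= span_nil limg0 dimv0 subn0 !limg_span !spE.
set Z := (lker (bdL F V) :&: _)%VS.
have SsA : (sp (ee F (V:=V)) S <= sp (ee F (V:=V)) (kfaces K k))%VS by apply: sp_sub.
have AZ : (sp (ee F (V:=V)) (kfaces K k) <= Z)%VS.
  apply: sp_subP => s sA; rewrite memv_cap ee_ker /=.
  exact: ee_Cspace.
have d1 := dimvS SsA; have d2 := dimvS AZ.
have -> : (\dim Z - \dim (sp (ee F (V:=V)) S) == \dim Z - \dim (sp (ee F (V:=V)) (kfaces K k)))%N
        = (sp (ee F (V:=V)) S == sp (ee F (V:=V)) (kfaces K k)).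
  rewrite eqEdim SsA /=; apply/idP/idP => /eqP h; apply/eqP; lia.
have := limg_ker_dim (bdL F V) <<[seq chi F i | i <- enum S]>>%VS.
rewrite limg_span spE capvC -sp_span (eqP (chi_indep F S)) => h.
rewrite andbC; congr (_ && _).
rewrite /indep; have := dim_sp_le (ee F (V:=V)) S.
move=> le; apply/idP/idP => /eqP H; apply/eqP; lia.
Qed.

Lemma pos_link K w k tau : #|tau| = k.+1 ->
  positive F K w tau = (ee F tau \in sp (ee F (V:=V)) (P w (kfaces K k) tau)).
Proof.
move=> ct; rewrite /positive /Cspace limg_span spE ct.
congr (_ \in sp _ _).
apply/setP => s; rewrite !inE.
case: (eqVneq s set0) => [->|_]; last by rewrite orbF; case: (s \in K); case: (w s < w tau); case: (#|s| == k.+1).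
by rewrite cards0 /= !andbF.
Qed.

Lemma pos_other K sigma w tau : #|tau| != #|sigma| ->
  positive F (sigma |: K) w tau = positive F K w tau.
Proof.
move=> ne; rewrite /positive /Cspace.
suff -> : simplices (Kminus (sigma |: K) w tau) #|tau| = simplices (Kminus K w tau) #|tau| by [].
apply/setP => s; rewrite !inE.
case: (eqVneq s sigma) => [->|] /=; last by [].

by rewrite [#|sigma| == _]eq_sym (negbTE ne) !andbF.
Qed.

End Link.
Theorem lemma3p2 (F : fieldType) (V : finType) (R : realType)
    (K : {set {set V}}) (sigma : {set V}) (k : nat) (w : {set V} -> R)
    (HK : is_complex K) (HKs : is_complex (sigma |: K))
    (Hsig : sigma \notin K) (Hdim : #|sigma| = k.+1)
    (Hmono : monotone_weight (sigma |: K) w)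
    (Hinj : {in kfaces (sigma |: K) k &, injective w})
    (M Ms : {set {set V}})
    (HM : is_MSA F K w k M) (HMs : is_MSA F (sigma |: K) w k Ms) :
  [/\ (#|Ms :\: M| <= 1)%N, (#|M :\: Ms| <= 1)%N,
      (#|[set tau in K | label F K w tau != label F (sigma |: K) w tau]| <= 1)%N &
      (label F (sigma |: K) w sigma = 1 ->
         M = Ms /\
         forall phi : R -> R,
           {in [pred x | 0 <= x] &, {mono phi : x y / x < y}} ->
           {in [pred x | 0 <= x], forall x, 0 <= phi x} ->
           Mphi phi w M = Mphi phi w Ms)].
Proof.
set A := kfaces K k.
have HA' : kfaces (sigma |: K) k = sigma |: A.
  apply/setP => s; rewrite !inE; case: (eqVneq s sigma) => [->|] //=.
  by rewrite Hdim eqxx.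
have sA : sigma \notin A by rewrite inE (negbTE Hsig).
have Hinj' : {in sigma |: A &, injective w} by rewrite -HA'.
have HinjA : {in A &, injective w}.
  by move=> x y xA yA; apply: Hinj'; apply/setU1P; right.
have eM : M = G (ee F (V:=V)) w A.
  case: HM => acM minM; apply: MSA_eq => //; first by rewrite -acyc_basis.
  by move=> S' bS'; apply: minM; rewrite acyc_basis.
have eMs : Ms = G (ee F (V:=V)) w (sigma |: A).
  case: HMs => acM minM; apply: MSA_eq => //; first by rewrite -HA' -acyc_basis.
  by move=> S' bS'; apply: minM; rewrite acyc_basis // HA'.
have D1 := le1_change (ee F (V:=V)) Hinj'.
have posD : forall tau, positive F K w tau != positive F (sigma |: K) w tau ->
    #|tau| = k.+1.
  move=> tau; apply: contraNeq => ne.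
  by rewrite pos_other ?Hdim.
split.
- rewrite eMs eM; apply: leq_trans (subset_leq_card (G_sub _ _ _ _)) _.
  by rewrite cards1.
- rewrite eMs eM; exact: leq_trans (subset_leq_card (G_sub2 _ _ _ _)) D1.
- apply: leq_trans D1; apply: subset_leq_card; apply/subsetP => tau.
  rewrite inE => /andP[tK ne].
  have ne' : positive F K w tau != positive F (sigma |: K) w tau.
    by move: ne; rewrite /label; case: (positive F K w tau); case: (positive F (sigma |: K) w tau).
  have ct := posD _ ne'.
  move: ne'; rewrite (@pos_link F V R K w k tau ct) (@pos_link F V R (sigma |: K) w k tau ct) HA' => ne'.
  by rewrite inE ne' andbT /A inE tK ct eqxx.
- move=> Hl.
  have Hp : positive F (sigma |: K) w sigma.
    by move: Hl; rewrite /label; case: (positive _ _ _ _).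
  move: Hp; rewrite (@pos_link F V R (sigma |: K) w k sigma Hdim) HA' => Hp.
  have eq : M = Ms by rewrite eM eMs G_same.
  by split => // phi _ _; rewrite eq.
Qed.
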